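(* Let $E$ be an Anderson $t$-module of dimension $d$ over $\mathscr O_L$ and $P\in A$ a monic irreducible polynomial. For all $a\in A\setminus\{0\}$ and all $x\in\mathbb T_z(L_P)^d\setminus\{0\}$, we have $\widetilde E_a(x)\ne0$.
   Context: $\mathbb F_q$ finite field, $A=\mathbb F_q[\theta]$, $K=\mathbb F_q(\theta)$, $L/K$ finite, $\mathscr O_L$ integral closure of $A$ in $L$, $\tau$ the $q$-Frobenius. An Anderson $t$-module of dimension $d$ over $\mathscr O_L$ is an $\mathbb F_q$-algebra homomorphism $E:A\to M_d(\mathscr O_L)\{\tau\}$, $E_a=\sum_iE_{a,i}\tau^i$, with $(E_{a,0}-aI_d)^d=0$ and $\deg_\tau E_\theta>0$. With $z$ an indeterminate fixed by $\tau$, the $z$-twist is $\widetilde E_a=\sum_iE_{a,i}z^i\tau^i$, acting on $d$-tuples. $K_P$ is the $P$-adic completion of $K$, $\mathbb T_z(K_P)$ the Tate algebra in $z$ over $K_P$, and $\mathbb T_z(L_P)=L\otimes_K\mathbb T_z(K_P)$, on which $\tau$ acts by $q$-th powers on $L\otimes K_P$-coefficients and trivially on $z$. *)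

(* Defs.v *)
From HB Require Import structures.
From mathcomp Require Import all_boot all_order all_algebra all_field.
From mathcomp Require Import fraction.
Set Implicit Arguments. Unset Strict Implicit. Unset Printing Implicit Defensive.
Import Order.TTheory GRing.Theory Num.Theory.
Local Open Scope ring_scope.

(* F = F_q (q = #|F|),  A = {poly F},  K = Frac A = F_q(theta). *)
Notation Kfrac F := {fraction {poly F}}.

Definition embA (F : finFieldType) (L : fieldExtType (Kfrac F)) (a : {poly F}) : L :=
  (tofrac a)%:A.

Definition integral_over_A (F : finFieldType) (L : fieldExtType (Kfrac F)) (x : L) : Prop :=
  exists p : {poly {poly F}}, p \is monic /\ root (map_poly (@embA F L) p) x.

Definition pval (F : finFieldType) (P f : {poly F}) : nat :=
  \max_(m < size f | (P ^+ m %| f)%R) (m : nat).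

Definition vclose (KP : fieldType) (v : KP -> int) (N : int) (x y : KP) : Prop :=
  x = y \/ N <= v (x - y).

(* (KP, iota, v) is a P-adic completion of K: v is a discrete valuation on KP
   (values on nonzero elements) extending the P-adic valuation of K through
   iota, K is dense in KP, and KP is complete. *)
Definition is_P_completion (F : finFieldType) (P : {poly F}) (KP : fieldType)
    (iota : {rmorphism Kfrac F -> KP}) (v : KP -> int) : Prop :=
  [/\ (forall x y : KP, x != 0 -> y != 0 -> v (x * y) = v x + v y),
      (forall x y : KP, x != 0 -> y != 0 -> x + y != 0 ->
          Num.min (v x) (v y) <= v (x + y)),
      (forall a : {poly F}, a != 0 -> v (iota (tofrac a)) = (pval P a)%:Z),
      (forall (x : KP) (N : int), exists k : Kfrac F, vclose v N x (iota k))
    & (forall u : nat -> KP,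
         (forall N : int, exists M : nat, forall m n : nat,
             (M <= m)%N -> (M <= n)%N -> vclose v N (u m) (u n)) ->
         exists l : KP, forall N : int, exists M : nat, forall n : nat,
             (M <= n)%N -> vclose v N (u n) l)].

(* ---- Anderson t-modules ----
   E a is the list of coefficients [E_{a,0}; E_{a,1}; ...] of the tau-polynomial
   E_a = sum_i E_{a,i} tau^i in M_d(L){tau}. *)
Definition Ecoef (F : finFieldType) (L : fieldExtType (Kfrac F)) (d : nat)
    (E : {poly F} -> seq 'M[L]_d) (a : {poly F}) (i : nat) : 'M[L]_d :=
  nth 0 (E a) i.

(* B^{(q^i)}: entrywise q^i-th power (tau^i B = B^{(q^i)} tau^i). *)
Definition frob_mx (F : finFieldType) (L : fieldExtType (Kfrac F)) (d : nat)
    (i : nat) (B : 'M[L]_d) : 'M[L]_d :=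
  map_mx (fun x => x ^+ (#|F| ^ i)%N) B.

Definition is_Anderson_t_module (F : finFieldType) (L : fieldExtType (Kfrac F))
    (d : nat) (E : {poly F} -> seq 'M[L]_d) : Prop :=
  [/\
      (forall a i r s, integral_over_A ((Ecoef E a i) r s)),
      (forall (c : F) (a b : {poly F}) i,
          Ecoef E (c *: a + b) i = embA L c%:P *: Ecoef E a i + Ecoef E b i),
      (forall i, Ecoef E 1 i = if i == 0%N then 1 else 0),
      (* multiplicativity in the skew ring M_d(L){tau} *)
      (forall a b k, Ecoef E (a * b) k =
          \sum_(i < k.+1) Ecoef E a i *m frob_mx i (Ecoef E b (k - i)%N))
    &
      ((forall a, (Ecoef E a 0 - (embA L a)%:M) ^+ d = 0)
       /\ (exists i, (0 < i)%N /\ Ecoef E 'X i != 0))].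

(* ---- L_P = L (x)_K K_P, in coordinates w.r.t. the K-basis bL of L ---- *)
Definition nL (F : finFieldType) (L : fieldExtType (Kfrac F)) : nat :=
  \dim (fullv : {vspace L}).
Definition bL (F : finFieldType) (L : fieldExtType (Kfrac F)) : (nL L).-tuple L :=
  vbasis (fullv : {vspace L}).

(* an element sum_i bL_i (x) u_i of L (x)_K KP is the row (u_i)_i *)
Definition LPt (F : finFieldType) (L : fieldExtType (Kfrac F)) (KP : fieldType) :=
  'rV[KP]_(nL L).

(* l |-> l (x) 1 *)
Definition inLP (F : finFieldType) (L : fieldExtType (Kfrac F)) (KP : fieldType)
    (iota : {rmorphism Kfrac F -> KP}) (l : L) : LPt L KP :=
  \row_i iota (coord (bL L) i l).

(* multiplication of L (x)_K KP, via structure constants of L over K *)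
Definition mulLP (F : finFieldType) (L : fieldExtType (Kfrac F)) (KP : fieldType)
    (iota : {rmorphism Kfrac F -> KP}) (u w : LPt L KP) : LPt L KP :=
  \row_k \sum_(i < nL L) \sum_(j < nL L)
     iota (coord (bL L) k (tnth (bL L) i * tnth (bL L) j)) * (u 0 i * w 0 j).

(* tau on L (x)_K KP : q-th power *)
Definition tauLP (F : finFieldType) (L : fieldExtType (Kfrac F)) (KP : fieldType)
    (iota : {rmorphism Kfrac F -> KP}) (u : LPt L KP) : LPt L KP :=
  iter #|F| (mulLP iota u) (inLP iota 1).

(* An element of T_z(L_P) = L (x)_K T_z(K_P) is a power series
   sum_n x n z^n with coefficients x n in L (x)_K KP whose coordinates tend
   to 0 P-adically. *)
Definition is_Tate (F : finFieldType) (L : fieldExtType (Kfrac F)) (KP : fieldType)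
    (v : KP -> int) (x : nat -> LPt L KP) : Prop :=
  forall (j : 'I_(nL L)) (N : int), exists M : nat, forall n : nat,
    (M <= n)%N -> vclose v N ((x n) 0 j) 0.

(* z-twist: (E~_a x)_r = sum_i sum_s E_{a,i}[r,s] z^i tau^i (x_s);
   coefficient of z^n of the r-th component. *)
Definition Etwist (F : finFieldType) (L : fieldExtType (Kfrac F)) (KP : fieldType)
    (iota : {rmorphism Kfrac F -> KP}) (d : nat) (E : {poly F} -> seq 'M[L]_d)
    (a : {poly F}) (x : 'I_d -> nat -> LPt L KP) (r : 'I_d) (n : nat) : LPt L KP :=
  \sum_(i < n.+1) \sum_(s < d)
     mulLP iota (inLP iota (Ecoef E a i r s)) (iter i (tauLP iota) (x s (n - i)%N)).

(* Main.v *)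
Require Import Defs.
From HB Require Import structures.
From mathcomp Require Import all_boot all_order all_algebra all_field.
From mathcomp Require Import fraction ring.
From Stdlib Require Import FunctionalExtensionality.
Import Order.TTheory GRing.Theory Num.Theory.
Local Open Scope ring_scope.

Set Implicit Arguments.
Unset Strict Implicit.
From mathcomp Require Import zify.

Section Aux.
Variables (F : finFieldType) (L : fieldExtType {fraction {poly F}}).
Variables (KP : fieldType) (iota : {rmorphism {fraction {poly F}} -> KP}).

Definition Rk (l : L) : 'M[{fraction {poly F}}]_(nL L) :=
  \matrix_(j, k) coord (bL L) k (l * tnth (bL L) j).

Lemma bL_expand (l : L) :
  l = \sum_(i < nL L) coord (bL L) i l *: tnth (bL L) i.
Proof.
rewrite {1}(coord_vbasis (memvf l)); apply: eq_bigr => i _.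
by rewrite (tnth_nth 0).
Qed.

Lemma mulLP_inLP (l : L) (u : LPt L KP) :
  mulLP iota (inLP iota l) u = u *m map_mx iota (Rk l).
Proof.
apply/rowP => k; rewrite !mxE exchange_big /=; apply: eq_bigr => j _.
rewrite !mxE.
have -> : l * tnth (bL L) j =
   \sum_(i < nL L) coord (bL L) i l *: (tnth (bL L) i * tnth (bL L) j).
  by rewrite {1}(bL_expand l) mulr_suml; apply: eq_bigr => i _; rewrite scalerAl.
rewrite linear_sum rmorph_sum mulr_sumr; apply: eq_bigr => i _.
rewrite linearZ /= rmorphM /= !mxE.
ring.
Qed.

Lemma Rk_mul (l l' : L) : Rk (l * l') = Rk l' *m Rk l.
Proof.
apply/matrixP => j k; rewrite !mxE.
rewrite -mulrA {1}(bL_expand (l' * tnth (bL L) j)) mulr_sumr linear_sum.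
apply: eq_bigr => m _; rewrite !mxE -scalerAr linearZ.
by [].
Qed.

Lemma Rk1 : Rk 1 = 1%:M.
Proof.
apply/matrixP => j k; rewrite !mxE mul1r (tnth_nth 0) coord_free //.
exact: basis_free (vbasisP _).
Qed.

Lemma Rk0 : Rk 0 = 0.
Proof. by apply/matrixP => j k; rewrite !mxE mul0r linear0. Qed.

Lemma RkD l l' : Rk (l + l') = Rk l + Rk l'.
Proof. by apply/matrixP => j k; rewrite !mxE mulrDl linearD. Qed.

Lemma Rk_sum I (r : seq I) (P : pred I) (f : I -> L) :
  Rk (\sum_(i <- r | P i) f i) = \sum_(i <- r | P i) Rk (f i).
Proof. exact: (big_morph Rk RkD Rk0). Qed.

Definition R (l : L) := map_mx iota (Rk l).

Lemma R_mul l l' : R (l * l') = R l' *m R l.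
Proof. by rewrite /R Rk_mul map_mxM. Qed.

Lemma R_sum I (r : seq I) (P : pred I) (f : I -> L) :
  R (\sum_(i <- r | P i) f i) = \sum_(i <- r | P i) R (f i).
Proof.
rewrite /R Rk_sum.
exact: (big_morph (map_mx iota) (@map_mxD _ _ iota _ _) (map_mx0 _ _ _)).
Qed.

Lemma R1 : R 1 = 1%:M.
Proof. by rewrite /R Rk1 map_mx1. Qed.

Lemma R0 : R 0 = 0.
Proof. by rewrite /R Rk0 map_mx0. Qed.

Definition Phi d (M : 'M[L]_d) (u : 'I_d -> LPt L KP) : 'I_d -> LPt L KP :=
  fun r => \sum_(s < d) u s *m R (M r s).

Lemma Phi_mul d (A B : 'M[L]_d) u : Phi (A *m B) u = Phi A (Phi B u).
Proof.
apply: functional_extensionality => r; rewrite /Phi.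
under [RHS]eq_bigr => t _ do rewrite mulmx_suml.
rewrite exchange_big /=; apply: eq_bigr => s _.
rewrite mxE R_sum mulmx_sumr; apply: eq_bigr => t _.
by rewrite R_mul mulmxA.
Qed.

Lemma Phi1 d u : Phi (1%:M : 'M[L]_d) u = u.
Proof.
apply: functional_extensionality => r; rewrite /Phi (bigD1 r) //= big1 ?addr0.
  by rewrite mxE eqxx R1 mulmx1.
by move=> s /negbTE hs; rewrite mxE eq_sym hs R0 mulmx0.
Qed.

Lemma Phi0 d (M : 'M[L]_d) : Phi M (fun _ => 0) = fun _ => 0.
Proof. by apply: functional_extensionality => r; rewrite /Phi big1 // => s _; rewrite mul0mx. Qed.

End Aux.

Lemma nil_left_inv (K : fieldType) n (M : 'M[K]_n.+1) (c : K) :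
  c != 0 -> (M - c%:M) ^+ n.+1 = 0 -> exists W, W *m M = 1%:M.
Proof.
move=> c0 hN.
set N := M - c%:M.
set T : 'M[K]_n.+1 := (- c^-1) *: N.
have hT : T ^+ n.+1 = 0 by rewrite /T exprZn hN scaler0.
have hS := subrX1 T n.+1; rewrite hT sub0r in hS.
have eM : M = (- c) *: (T - 1).
  rewrite /T scalerBr scalerA mulrN mulNr opprK mulfV // scale1r /N.
  by rewrite scaleNr opprK -scalemx1 subrK.
have [uM _] : M \in unitmx /\ (c^-1 *: \sum_(i < n.+1) T ^+ i) \in unitmx.
  apply: mulmx1_unit.
  by rewrite mulmxE -scalerAr {1}eM -scalerAl -hS scalerA mulrN mulVf // scaleN1r opprK.
by exists (invmx M); rewrite mulVmx.
Qed.

Theorem mainTheorem20 (F : finFieldType) (L : fieldExtType {fraction {poly F}})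
    (d : nat) (E : {poly F} -> seq 'M[L]_d)
    (P : {poly F}) (KP : fieldType) (iota : {rmorphism {fraction {poly F}} -> KP})
    (v : KP -> int) :
  is_Anderson_t_module E ->
  P \is monic -> irreducible_poly P ->
  is_P_completion P iota v ->
  forall a : {poly F}, a != 0 ->
  forall x : 'I_d -> nat -> LPt L KP,
    (forall s, is_Tate v (x s)) ->
    (exists s n, x s n != 0) ->
    exists r n, Etwist iota E a x r n != 0.
Proof.
move=> HE _ _ _ a a0 x _ [s0 [m0 hx0]].
move: E x HE s0 hx0; case: d => [|d] E x HE s0 hx0; first by case: s0 hx0.
case: HE => _ _ _ _ [Hnil _].
have c0 : embA L a != 0.
  by rewrite /embA scaler_eq0 oner_eq0 orbF tofrac_eq0.
have [W hW] := nil_left_inv c0 (Hnil a).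
set M := Ecoef E a 0 in hW.
have mul0 : forall w : LPt L KP, mulLP iota 0 w = 0.
  move=> w; apply/rowP => k; rewrite !mxE big1 // => i _.
  by rewrite big1 // => j _; rewrite mxE mul0r mulr0.
have q0 : tauLP iota (0 : LPt L KP) = 0.
  rewrite /tauLP; have : (0 < #|F|)%N by apply/card_gt0P; exists 0.
  by case: #|F| => // q _ /=; rewrite mul0.
have iter0 k : iter k (tauLP iota) (0 : LPt L KP) = 0.
  by elim: k => //= k ->.
pose p n := [exists s, x s n != 0].
have ex : exists n, p n by exists m0; apply/existsP; exists s0.
case: (ex_minnP ex) => n0 /existsP [s1 hs1] hmin.
have key r : Etwist iota E a x r n0 = Phi iota M (fun s => x s n0) r.
  rewrite /Etwist big_ord_recl /= subn0 [X in _ + X]big1 ?addr0.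
    by rewrite /Phi; apply: eq_bigr => s _; rewrite mulLP_inLP.
  move=> i _; apply: big1 => s _.
  case: (eqVneq (x s (n0 - bump 0 i)%N) 0) => [-> | hne].
    by rewrite iter0 ?q0 mulLP_inLP mul0mx.
  exfalso; have := hmin _ (introT existsP (ex_intro _ s hne)).
  have := ltn_ord i; rewrite /bump /=; lia.
case: (boolP [exists r, Etwist iota E a x r n0 != 0]) => [/existsP [r hr] | hno].
  by exists r, n0.
exfalso; move: hno; rewrite negb_exists => /forallP hno.
have hz : Phi iota M (fun s => x s n0) = fun _ => 0.
  apply: functional_extensionality => r; rewrite -key.
  by apply/eqP; move: (hno r); rewrite negbK.
have : (fun s => x s n0) = fun _ => 0.
  by rewrite -(Phi1 iota (fun s => x s n0)) -hW Phi_mul hz Phi0.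
by move/(congr1 (fun f => f s1)) => /= h; rewrite h eqxx in hs1.
Qed.
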